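(* Every abelian group possessing a subgroup of finite index which is of profinite type is itself of profinite type.
   Context: An abstract group is of profinite type if it admits a topology making it a profinite group (compact, Hausdorff, totally disconnected topological group). *)

(* Defs.v *)
From mathcomp Require Import all_boot all_algebra.
Set Implicit Arguments. Unset Strict Implicit. Unset Printing Implicit Defensive.
Import GRing.Theory.
Local Open Scope ring_scope.

Fixpoint inl (I : Type) (i : I) (s : list I) : Prop :=
  if s is j :: s' then j = i \/ inl i s' else False.

Section Topology.
Variable G : Type.

Definition is_topology (O : (G -> Prop) -> Prop) : Prop :=
  O (fun _ => True) /\
  (forall (I : Type) (U : I -> G -> Prop), (forall i, O (U i)) ->
     O (fun x => exists i, U i x)) /\
  (forall U V, O U -> O V -> O (fun x => U x /\ V x)).

(* Product topology on G * G (open sets = unions of open boxes). *)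
Definition prod_open (O : (G -> Prop) -> Prop) (W : G * G -> Prop) : Prop :=
  forall p, W p -> exists U V, [/\ O U, O V, U p.1, V p.2 &
                    forall q, U q.1 -> V q.2 -> W q].

Definition compact_top (O : (G -> Prop) -> Prop) : Prop :=
  forall (I : Type) (U : I -> G -> Prop), (forall i, O (U i)) ->
    (forall x, exists i, U i x) ->
    exists s : list I, forall x, exists i, inl i s /\ U i x.

Definition hausdorff_top (O : (G -> Prop) -> Prop) : Prop :=
  forall x y, x <> y -> exists U V, [/\ O U, O V, U x, V y &
                                  forall z, U z -> V z -> False].

Definition connected_subset (O : (G -> Prop) -> Prop) (S : G -> Prop) : Prop :=
  ~ exists U V, O U /\ O V /\ (forall x, S x -> U x \/ V x) /\
                 (exists x, S x /\ U x) /\ (exists x, S x /\ V x) /\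
                 (forall x, S x -> U x -> V x -> False).

Definition totally_disconnected_top (O : (G -> Prop) -> Prop) : Prop :=
  forall S, connected_subset O S -> forall x y, S x -> S y -> x = y.

Definition profinite_topology (add : G -> G -> G) (opp : G -> G)
    (O : (G -> Prop) -> Prop) : Prop :=
  is_topology O /\
  (forall W, O W -> prod_open O (fun p => W (add p.1 p.2))) /\
  (forall W, O W -> O (fun x => W (opp x))) /\
  compact_top O /\ hausdorff_top O /\ totally_disconnected_top O.

Definition of_profinite_type (add : G -> G -> G) (opp : G -> G) : Prop :=
  exists O, profinite_topology add opp O.
End Topology.

Definition is_subgroup (A : zmodType) (B : {pred A}) : Prop :=
  (0 \in B) /\ (forall x y, x \in B -> y \in B -> x - y \in B).

Lemma subgroup_opp (A : zmodType) (B : {pred A}) (hB : is_subgroup B) x :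
  x \in B -> - x \in B.
Proof. by case: hB => h0 hs hx; rewrite -sub0r hs. Qed.

Lemma subgroup_add (A : zmodType) (B : {pred A}) (hB : is_subgroup B) x y :
  x \in B -> y \in B -> x + y \in B.
Proof.
by case: (hB) => h0 hs hx hy; rewrite -[y]opprK hs // subgroup_opp.
Qed.

Definition sub_add (A : zmodType) (B : {pred A}) (hB : is_subgroup B)
  (x y : {a : A | a \in B}) : {a : A | a \in B} :=
  exist _ (sval x + sval y) (subgroup_add hB (svalP x) (svalP y)).

Definition sub_opp (A : zmodType) (B : {pred A}) (hB : is_subgroup B)
  (x : {a : A | a \in B}) : {a : A | a \in B} :=
  exist _ (- sval x) (subgroup_opp hB (svalP x)).

Definition finite_index (A : zmodType) (B : {pred A}) : Prop :=
  exists s : seq A, forall a, exists2 c, c \in s & a - c \in B.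

(* Main.v *)
Require Import Defs.
From mathcomp Require Import all_boot all_algebra.
From Stdlib Require Import FunctionalExtensionality PropExtensionality.
Set Implicit Arguments. Unset Strict Implicit.
Import GRing.Theory.
Local Open Scope ring_scope.

Lemma open_ext (G : Type) (O : (G -> Prop) -> Prop) (U V : G -> Prop) :
  (forall x, U x <-> V x) -> O U -> O V.
Proof.
move=> h; have -> : V = U; last by [].
apply: functional_extensionality => x; apply: propositional_extensionality.
by split; apply h.
Qed.

Lemma open_local (G : Type) (O : (G -> Prop) -> Prop) (S : G -> Prop) :
  is_topology O ->
  (forall p, S p -> exists V, [/\ O V, V p & forall q, V q -> S q]) -> O S.
Proof.
case=> _ [hU _] h.
pose I := {V : G -> Prop | O V /\ forall q, V q -> S q}.
have := hU I (fun i => sval i) (fun i => proj1 (svalP i)).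
apply: open_ext => x; split.
- by case=> [[V [_ hV]]] /= /hV.
- by move=> /h [V [oV Vx hV]]; exists (exist _ V (conj oV hV)).
Qed.

Lemma open_empty (G : Type) (O : (G -> Prop) -> Prop) :
  is_topology O -> O (fun _ : G => False).
Proof.
case=> _ [hU _].
have := hU False (fun i => match i with end) (fun i => match i with end).
by apply: open_ext => x; split => // [[]].
Qed.

Lemma inl_catl (I : Type) (i : I) (l1 l2 : list I) :
  Defs.inl i l1 -> Defs.inl i (l1 ++ l2).
Proof. by elim: l1 => //= j l IH [->|/IH]; [left|right]. Qed.

Lemma inl_catr (I : Type) (i : I) (l1 l2 : list I) :
  Defs.inl i l2 -> Defs.inl i (l1 ++ l2).
Proof. by elim: l1 => //= j l IH /IH; right. Qed.

Section Main.
Variables (A : zmodType) (B : {pred A}) (hB : is_subgroup B).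
Local Notation SB := {a : A | a \in B}.
Variable O : (SB -> Prop) -> Prop.
Hypothesis hO : profinite_topology (sub_add hB) (sub_opp hB) O.

Let topO : is_topology O := proj1 hO.

Definition OA (W : A -> Prop) : Prop := forall a, O (fun b : SB => W (a + sval b)).

Definition img (c : A) (V : SB -> Prop) : A -> Prop :=
  fun z => exists v, V v /\ z = c + sval v.

Lemma sub_eq (u v : SB) : sval u = sval v -> u = v.
Proof.
case: u v => [u hu] [v hv] /= e; subst; congr exist; apply: eq_irrelevance.
Qed.

Definition z0 : SB := exist _ 0 (proj1 hB).

Lemma transl W (b0 : SB) : O W -> O (fun b => W (sub_add hB b0 b)).
Proof.
move=> oW; apply: open_local => // b Wb.
have [U [V [oU oV Ub0 Vb hUV]]] := (proj1 (proj2 hO)) W oW (b0, b) Wb.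
by exists V; split => // q Vq; exact: (hUV (b0, q)).
Qed.

Lemma img_open c V : O V -> OA (img c V).
Proof.
move=> oV a.
case: (boolP (a - c \in B)) => hd.
- pose d : SB := exist _ (a - c) hd.
  apply: open_ext (transl d oV) => b; split.
  + move=> Vdb; exists (sub_add hB d b); split => //=.
    by rewrite addrA [c + _]addrC subrK.
  + case=> v [Vv e].
    have -> : sub_add hB d b = v => //.
    apply: sub_eq => /=.
    have -> : sval v = a + sval b - c by rewrite e [c + _]addrC addrK.
    by rewrite addrAC.
- apply: open_ext (open_empty topO) => b; split => // [[v [_ e]]].
  have ea : a = c + sval v - sval b by rewrite -e addrK.
  have : a - c = sval v - sval b.
    by rewrite ea addrAC [c + _]addrC addrK.
  move=> e2; case/negP: hd; rewrite e2.
  by case: hB => _ hs; exact: hs (svalP v) (svalP b).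
Qed.

Lemma OA_top : is_topology OA.
Proof.
case: topO => hT [hU hI]; split; first by move=> a.
split.
- move=> I U hUo a; exact: (hU I (fun i b => U i (a + sval b)) (fun i => hUo i a)).
- move=> U V oU oV a; exact: hI _ _ (oU a) (oV a).
Qed.

Lemma img_mem c V v : V v -> img c V (c + sval v).
Proof. by move=> Vv; exists v. Qed.

Lemma OA_add W : OA W -> prod_open OA (fun p => W (p.1 + p.2)).
Proof.
move=> oW [p1 p2] /= Wp.
have W0 : W (p1 + p2 + sval (sub_add hB z0 z0)) by rewrite /= !addr0.
have [U [V [oU oV U0 V0 hUV]]] := (proj1 (proj2 hO)) _ (oW (p1 + p2)) (z0, z0) W0.
exists (img p1 U), (img p2 V); split.
- exact: img_open.
- exact: img_open.
- by exists z0; split => //=; rewrite addr0.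
- by exists z0; split => //=; rewrite addr0.
- move=> [q1 q2] /= [u [Uu ->]] [v [Vv ->]].
  by rewrite addrACA; exact: (hUV (u, v)).
Qed.

Lemma OA_opp W : OA W -> OA (fun x => W (- x)).
Proof.
move=> oW a.
have := (proj1 (proj2 (proj2 hO))) _ (oW (- a)).
by apply: open_ext => b /=; rewrite opprD.
Qed.

Lemma combine (I : Type) (U : I -> A -> Prop) (s : seq A) :
  (forall c, c \in s -> exists l : list I,
     forall b : SB, exists i, Defs.inl i l /\ U i (c + sval b)) ->
  exists l : list I, forall c, c \in s ->
     forall b : SB, exists i, Defs.inl i l /\ U i (c + sval b).
Proof.
elim: s => [|c s IH] h; first by exists nil.
have [l1 h1] := h c (mem_head _ _).
have [l2 h2] : exists l2 : list I, forall c', c' \in s ->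
     forall b : SB, exists i, Defs.inl i l2 /\ U i (c' + sval b).
  by apply: IH => c' hc'; apply: h; rewrite in_cons hc' orbT.
exists (l1 ++ l2) => c'; rewrite in_cons => /orP [/eqP -> | hc'] b.
- by have [i [li Ui]] := h1 b; exists i; split => //; apply: inl_catl.
- by have [i [li Ui]] := h2 c' hc' b; exists i; split => //; apply: inl_catr.
Qed.

Lemma OA_compact : finite_index B -> compact_top OA.
Proof.
move=> [s hs] I U hUo hcov.
have [l hl] := @combine I U s (fun c _ =>
  (proj1 (proj2 (proj2 (proj2 hO)))) I (fun i b => U i (c + sval b))
     (fun i => hUo i c) (fun b => hcov (c + sval b))).
exists l => x; have [c cs hc] := hs x.
have [i [li Ui]] := hl c cs (exist _ (x - c) hc).
by exists i; split => //; move: Ui => /=; rewrite addrC subrK.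
Qed.

Lemma img_disj c V1 V2 z :
  img c V1 z -> img c V2 z -> exists v, V1 v /\ V2 v /\ z = c + sval v.
Proof.
move=> [u [Vu ->]] [v [Vv e]].
have uv : u = v by apply: sub_eq; move/addrI: e.
by exists u; split => //; rewrite uv.
Qed.

Lemma OA_hausdorff : hausdorff_top OA.
Proof.
move=> x y xy.
case: (boolP (y - x \in B)) => hd.
- pose d : SB := exist _ (y - x) hd.
  have dz : d <> z0.
    by move=> /(f_equal sval) /= /eqP; rewrite subr_eq0 => /eqP e; apply: xy.
  have [U [V [oU oV Uz Vd hUV]]] := (proj1 (proj2 (proj2 (proj2 (proj2 hO))))) z0 d
      (fun e => dz (esym e)).
  exists (img x U), (img x V); split; try exact: img_open.
  + by exists z0; split => //=; rewrite addr0.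
  + by exists d; split => //=; rewrite addrC subrK.
  + move=> z Uz1 Vz1; have [v [Uv [Vv _]]] := img_disj Uz1 Vz1.
    exact: hUV v Uv Vv.
- have oT : O (fun _ => True) by case: topO.
  exists (img x (fun _ => True)), (img y (fun _ => True)); split; try exact: img_open.
  + by exists z0; split => //=; rewrite addr0.
  + by exists z0; split => //=; rewrite addr0.
  + move=> z [u [_ ->]] [v [_ e]]; case/negP: hd.
    have -> : y - x = sval u - sval v.
      by rewrite -[y](addrK (sval v)) -e addrAC [x + _]addrC addrK.
    by case: hB => _ hs; exact: hs (svalP u) (svalP v).
Qed.

Lemma memB_shift a w (b : SB) : (a + sval b - w \in B) = (a - w \in B).
Proof.
have hs := proj2 hB.
apply/idP/idP => h.
- have -> : a - w = a + sval b - w - sval b by rewrite addrAC addrK.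
  exact: hs h (svalP b).
- rewrite addrAC; apply: (subgroup_add hB) => //; exact: (svalP b).
Qed.

Lemma coset_open w (q : bool) : OA (fun t => (t - w \in B) = q).
Proof.
move=> a.
case: topO => hT _.
case: (boolP ((a - w \in B) == q)) => /eqP hq.
- by apply: open_ext hT => b; rewrite /= memB_shift hq.
- by apply: open_ext (open_empty topO) => b; rewrite /= memB_shift; split.
Qed.

Lemma same_coset S : connected_subset OA S ->
  forall z w, S z -> S w -> z - w \in B.
Proof.
move=> hS z w Sz Sw; apply/negPn/negP => hzw; apply: hS.
exists (fun t => (t - w \in B) = true), (fun t => (t - w \in B) = false).
split; first exact: coset_open.
split; first exact: coset_open.
split; first by move=> t _; case: (t - w \in B); [left|right].
split; first by exists w; split => //; rewrite subrr; exact: (proj1 hB).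
split; first by exists z; split => //; apply/negbTE.
by move=> t _ ->.
Qed.

Lemma OA_td : totally_disconnected_top OA.
Proof.
move=> S hS x y Sx Sy.
pose S' := fun b : SB => S (x + sval b).
have hS' : connected_subset O S'.
  move=> [U' [V' [oU [oV [cov [[b1 [Sb1 Ub1]] [[b2 [Sb2 Vb2]] dis]]]]]]].
  apply: (hS); exists (img x U'), (img x V').
  split; first exact: img_open.
  split; first exact: img_open.
  split.
    move=> t St; have hb := same_coset hS St Sx.
    pose b : SB := exist _ (t - x) hb.
    have Sb : S' b by rewrite /S' /= addrC subrK.
    have et : t = x + sval b by rewrite /= addrC subrK.
    by case: (cov b Sb) => h; [left|right]; exists b.
  split; first by exists (x + sval b1); split => //; exists b1.
  split; first by exists (x + sval b2); split => //; exists b2.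
  move=> t St Ut Vt; have [v [Uv [Vv et]]] := img_disj Ut Vt.
  by apply: (dis v) => //; rewrite /S' -et.
have hd := same_coset hS Sy Sx.
have := (proj2 (proj2 (proj2 (proj2 (proj2 hO))))) S' hS' z0
   (exist _ (y - x) hd).
rewrite /S' /= addr0 addrC subrK => /(_ Sx Sy) /(f_equal sval) /= /eqP.
by rewrite eq_sym subr_eq0 => /eqP.
Qed.

Lemma OA_profinite : finite_index B ->
  profinite_topology (fun x y : A => x + y) (fun x : A => - x) OA.
Proof.
move=> hfi; split; first exact: OA_top.
split; first exact: OA_add.
split; first exact: OA_opp.
split; first exact: OA_compact.
split; first exact: OA_hausdorff.
exact: OA_td.
Qed.
End Main.

Theorem mainTheorem8 (A : zmodType) (B : {pred A}) (hB : is_subgroup B) :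
  finite_index B ->
  of_profinite_type (sub_add hB) (sub_opp hB) ->
  of_profinite_type (fun x y : A => (x + y)%R) (fun x : A => (- x)%R).
Proof.
move=> hfi [O hO]; exists (OA O); exact: OA_profinite.
Qed.
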